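(* Let $(f,I,U)$ be a safety verification problem that is robustly safe with robustness margin $\mu>0$, with $\overline{I}\cap\overline{U}=\emptyset$ and $\mathbb{R}^n\setminus U$ bounded, and let $V$ be a $\mu$-robust safety certificate of $(f,I,U)$. Let $\partial\overline{V}$ denote the boundary of the closure of $V$. Then for every $x\in R^{\mathbb{R}}_f(\partial\overline{V})$ there is precisely one $t\in\mathbb{R}$ such that $\varphi_f(x,t)\in\partial\overline{V}$.
   Context: A safety verification problem is a triple $(f,I,U)$ with $f:\mathbb{R}^n\to\mathbb{R}^n$ smooth, $I,U\subseteq\mathbb{R}^n$. Convention: the flow $\varphi_f(x,t)$ of $\dot x=f(x)$ (the state reached at time $t\in\mathbb{R}$ from $x$; negative $t$ allowed, $\varphi_f(x,t)=y$ iff $\varphi_f(y,-t)=x$) is defined for all $x$, $t$. For $X\subseteq\mathbb{R}^n$, $R^{\mathbb{R}}_f(X)=\{\varphi_f(x,t)\mid x\in X,\ t\in\mathbb{R}\}$. For $\varepsilon\ge 0$, an $\varepsilon$-solution of $\dot x=f(x)$ is a differentiable function $x:\mathbb{R}^{\ge0}\to\mathbb{R}^n$ with $\|f(x(t))-\dot x(t)\|\le\varepsilon$ for all $t\ge0$. For $X\subseteq\mathbb{R}^n$, $T\subseteq\mathbb{R}^{\ge0}$: $R^{T}_{f,\varepsilon}(X)=\{x(t)\mid t\in T,\ x\text{ an }\varepsilon\text{-solution with }x(0)\in X\}$, $R_{f,\varepsilon}(X)=R^{\mathbb{R}^{\ge0}}_{f,\varepsilon}(X)$. Robustly safe with robustness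 margin $\mu>0$ means $R_{f,\mu}(I)\cap U=\emptyset$. A $\mu$-robust safety certificate is a set $V$ with $I\subseteq V$, $R_{f,\mu}(V)\subseteq V$, $V\cap U=\emptyset$. *)

(* Defs.v *)
From Stdlib Require Import Reals Lra.
From Stdlib Require Vectors.Fin.
Open Scope R_scope.

Definition Rn (n : nat) : Type := Fin.t n -> R.

Fixpoint fsum (n : nat) : (Fin.t n -> R) -> R :=
  match n return (Fin.t n -> R) -> R with
  | O => fun _ => 0
  | S m => fun v => v Fin.F1 + fsum m (fun i => v (Fin.FS i))
  end.

Definition vadd {n} (x y : Rn n) : Rn n := fun i => x i + y i.
Definition vsub {n} (x y : Rn n) : Rn n := fun i => x i - y i.
Definition vscale {n} (a : R) (x : Rn n) : Rn n := fun i => a * x i.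
Definition basis {n} (i : Fin.t n) : Rn n :=
  fun j => if Fin.eq_dec i j then 1 else 0.

Definition norm_Rn {n} (x : Rn n) : R := sqrt (fsum n (fun i => x i * x i)).
Definition dist_Rn {n} (x y : Rn n) : R := norm_Rn (vsub x y).

Definition closure_Rn {n} (A : Rn n -> Prop) : Rn n -> Prop :=
  fun x => forall eps, 0 < eps -> exists y, A y /\ dist_Rn x y < eps.
Definition complement_Rn {n} (A : Rn n -> Prop) : Rn n -> Prop := fun x => ~ A x.
Definition boundary_Rn {n} (A : Rn n -> Prop) : Rn n -> Prop :=
  fun x => closure_Rn A x /\ closure_Rn (complement_Rn A) x.
Definition bounded_Rn {n} (A : Rn n -> Prop) : Prop :=
  exists M, forall x, A x -> norm_Rn x <= M.

Definition continuous_Rn {n} (g : Rn n -> R) : Prop :=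
  forall x eps, 0 < eps -> exists delta, 0 < delta /\
    forall y, dist_Rn y x < delta -> Rabs (g y - g x) < eps.

Fixpoint Ck {n} (k : nat) (g : Rn n -> R) : Prop :=
  match k with
  | O => continuous_Rn g
  | S k' => continuous_Rn g /\
      forall i : Fin.t n, exists dg : Rn n -> R,
        (forall x, derivable_pt_lim (fun h => g (vadd x (vscale h (basis i)))) 0 (dg x))
        /\ Ck k' dg
  end.

Definition smooth {n} (f : Rn n -> Rn n) : Prop :=
  forall (j : Fin.t n) (k : nat), Ck k (fun x => f x j).

Definition has_deriv_nonneg {n} (x : R -> Rn n) (t : R) (d : Rn n) : Prop :=
  forall i : Fin.t n, forall eps, 0 < eps -> exists delta, 0 < delta /\
    forall s, 0 <= s -> s <> t -> Rabs (s - t) < delta ->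
      Rabs ((x s i - x t i) / (s - t) - d i) < eps.

(** eps-solution: a differentiable x : R>=0 -> R^n with |f(x t) - x'(t)| <= eps.
    (Values of x at negative times are irrelevant.) *)
Definition eps_solution {n} (f : Rn n -> Rn n) (eps : R) (x : R -> Rn n) : Prop :=
  exists dx : R -> Rn n,
    forall t, 0 <= t -> has_deriv_nonneg x t (dx t) /\ norm_Rn (vsub (f (x t)) (dx t)) <= eps.

Definition reach {n} (f : Rn n -> Rn n) (eps : R) (X : Rn n -> Prop) : Rn n -> Prop :=
  fun y => exists (x : R -> Rn n) (t : R),
    eps_solution f eps x /\ X (x 0) /\ 0 <= t /\ y = x t.

Definition is_flow {n} (f : Rn n -> Rn n) (phi : Rn n -> R -> Rn n) : Prop :=
  forall x, phi x 0 = x /\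
    forall t (i : Fin.t n), derivable_pt_lim (fun s => phi x s i) t (f (phi x t) i).

Definition reach_flow {n} (phi : Rn n -> R -> Rn n) (X : Rn n -> Prop) : Rn n -> Prop :=
  fun y => exists x t, X x /\ y = phi x t.

Definition robustly_safe {n} (f : Rn n -> Rn n) (I U : Rn n -> Prop) (mu : R) : Prop :=
  forall y, reach f mu I y -> ~ U y.

Definition robust_certificate {n} (f : Rn n -> Rn n) (I U : Rn n -> Prop) (mu : R)
  (V : Rn n -> Prop) : Prop :=
  (forall x, I x -> V x) /\ (forall y, reach f mu V y -> V y) /\ (forall x, V x -> ~ U x).

(* Main.v *)
Require Import Defs.
From Stdlib Require Import Reals Lra Lia Classical.
From Stdlib Require Vectors.Fin.
From Stdlib Require Import FunctionalExtensionality.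
From Coquelicot Require Coquelicot.
Open Scope R_scope.

Module PD.
Import Coquelicot.Coquelicot.
Lemma poly_deriv a0 c0 k0 T t : T <> 0 ->
  derivable_pt_lim (fun s => a0 + s / T * c0 + s * (s - T) / T * k0) t (c0 / T + (2 * t - T) / T * k0).
Proof.
  intros HT. apply is_derive_Reals. auto_derive. auto. field. auto.
Qed.
End PD.
Import PD.


Definition L1 {n} (v : Rn n) : R := fsum n (fun i => Rabs (v i)).

Lemma fsum_ext n (a b : Fin.t n -> R) : (forall i, a i = b i) -> fsum n a = fsum n b.
Proof. induction n; simpl; intros H; [reflexivity|]. rewrite H, (IHn (fun i => a (Fin.FS i)) (fun i => b (Fin.FS i))); auto. Qed.

Lemma fsum_le n (a b : Fin.t n -> R) : (forall i, a i <= b i) -> fsum n a <= fsum n b.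
Proof. induction n; simpl; intros H; [lra|]. specialize (IHn (fun i => a (Fin.FS i)) (fun i => b (Fin.FS i)) (fun i => H _)). specialize (H Fin.F1). lra. Qed.

Lemma fsum_plus n (a b : Fin.t n -> R) : fsum n (fun i => a i + b i) = fsum n a + fsum n b.
Proof. induction n; simpl; [lra|]. rewrite (IHn (fun i => a (Fin.FS i)) (fun i => b (Fin.FS i))). lra. Qed.

Lemma fsum_scal n c (a : Fin.t n -> R) : fsum n (fun i => c * a i) = c * fsum n a.
Proof. induction n; simpl; [lra|]. rewrite (IHn (fun i => a (Fin.FS i))). lra. Qed.

Lemma fsum_const n c : fsum n (fun _ => c) = INR n * c.
Proof. induction n; simpl fsum; [simpl; lra|]. rewrite IHn, S_INR. lra. Qed.

Lemma fsum_nonneg n (a : Fin.t n -> R) : (forall i, 0 <= a i) -> 0 <= fsum n a.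
Proof. intros H. rewrite <- (Rmult_0_r (INR n)), <- fsum_const. apply fsum_le; auto. Qed.

Lemma fsum_term n (a : Fin.t n -> R) i : (forall j, 0 <= a j) -> a i <= fsum n a.
Proof.
  induction n as [|m IH]; intros H. { inversion i. }
  simpl. pattern i; apply Fin.caseS'.
  - pose proof (fsum_nonneg m (fun j => a (Fin.FS j)) (fun j => H _)). lra.
  - intros p. pose proof (IH (fun j => a (Fin.FS j)) p (fun j => H _)). pose proof (H Fin.F1). simpl in *. lra.
Qed.

Lemma fsum_zero n (a : Fin.t n -> R) i : (forall j, 0 <= a j) -> fsum n a <= 0 -> a i = 0.
Proof. intros H H2. pose proof (fsum_term n a i H). pose proof (H i). lra. Qed.

Lemma L1_nonneg n (v : Rn n) : 0 <= L1 v.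
Proof. apply fsum_nonneg. intros; apply Rabs_pos. Qed.

Lemma comp_le_L1 n (v : Rn n) i : Rabs (v i) <= L1 v.
Proof. apply (fsum_term n (fun j => Rabs (v j))). intros; apply Rabs_pos. Qed.

Lemma fsum_sq_le n (v : Rn n) : fsum n (fun i => v i * v i) <= (L1 v) * (L1 v).
Proof.
  unfold L1. induction n as [|m IH]; simpl; [lra|].
  specialize (IH (fun j => v (Fin.FS j))). simpl in IH.
  pose proof (fsum_nonneg m (fun i => Rabs (v (Fin.FS i))) (fun i => Rabs_pos _)).
  pose proof (Rabs_pos (v Fin.F1)).
  assert (v Fin.F1 * v Fin.F1 = Rabs (v Fin.F1) * Rabs (v Fin.F1)) by (rewrite <- Rabs_mult; rewrite Rabs_right; [lra| apply Rle_ge; nra]).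
  nra.
Qed.

Lemma norm_le_L1 n (v : Rn n) : norm_Rn v <= L1 v.
Proof.
  unfold norm_Rn. rewrite <- (sqrt_Rsqr (L1 v)) by apply L1_nonneg.
  apply sqrt_le_1_alt. unfold Rsqr. apply fsum_sq_le.
Qed.

Lemma comp_le_norm n (v : Rn n) i : Rabs (v i) <= norm_Rn v.
Proof.
  unfold norm_Rn. rewrite <- (sqrt_Rsqr (Rabs (v i))) by apply Rabs_pos.
  apply sqrt_le_1_alt. unfold Rsqr. rewrite <- Rabs_mult, Rabs_right by (apply Rle_ge; nra).
  apply (fsum_term n (fun j => v j * v j)). intros; nra.
Qed.

Lemma L1_le_norm n (v : Rn n) : L1 v <= INR n * norm_Rn v.
Proof. rewrite <- fsum_const. apply fsum_le. intros; apply comp_le_norm. Qed.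

Lemma L1_triangle n (u v : Rn n) : L1 (vadd u v) <= L1 u + L1 v.
Proof. unfold L1, vadd. rewrite <- fsum_plus. apply fsum_le. intros; apply Rabs_triang. Qed.

Lemma norm_vsub_sym n (a b : Rn n) : norm_Rn (vsub a b) = norm_Rn (vsub b a).
Proof. unfold norm_Rn, vsub. f_equal. apply fsum_ext. intros; ring. Qed.

Lemma norm_zero n (a : Rn n) : norm_Rn (vsub a a) = 0.
Proof. unfold norm_Rn, vsub. rewrite <- sqrt_0. f_equal. rewrite (fsum_ext n _ (fun _ => 0)). rewrite fsum_const; ring. intros; ring. Qed.

Lemma L1_bound n (v : Rn n) c : (forall i, Rabs (v i) <= c) -> L1 v <= INR n * c.
Proof. intros H. rewrite <- fsum_const. apply fsum_le; auto. Qed.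

Lemma fin_param n (P : Fin.t n -> R -> R -> Prop) :
  (forall j d d' M M', 0 < d' <= d -> M <= M' -> P j d M -> P j d' M') ->
  (forall j, exists d M, 0 < d /\ P j d M) ->
  exists d M, 0 < d /\ forall j, P j d M.
Proof.
  induction n as [|m IH]; intros Hm H.
  - exists 1, 0. split; [lra|]. intros j; inversion j.
  - destruct (IH (fun j => P (Fin.FS j))) as [d1 [M1 [Hd1 H1]]].
    { intros; eapply Hm; eauto. } { intros; apply H. }
    destruct (H Fin.F1) as [d0 [M0 [Hd0 H0]]].
    exists (Rmin d0 d1), (Rmax M0 M1). split. { apply Rmin_glb_lt; auto. }
    intros j. pattern j; apply Fin.caseS'.
    + eapply Hm; [|apply Rmax_l|exact H0]. split; [apply Rmin_glb_lt; auto|apply Rmin_l].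
    + intros p. eapply Hm; [|apply Rmax_r|exact (H1 p)]. split; [apply Rmin_glb_lt; auto|apply Rmin_r].
Qed.

Lemma fin_delta n (P : Fin.t n -> R -> Prop) :
  (forall j d d', 0 < d' <= d -> P j d -> P j d') ->
  (forall j, exists d, 0 < d /\ P j d) ->
  exists d, 0 < d /\ forall j, P j d.
Proof.
  intros Hm H. destruct (fin_param n (fun j d (_:R) => P j d)) as [d [_ [Hd Hp]]].
  { intros; eapply Hm; eauto. } { intros j; destruct (H j) as [d Hd]; exists d, 0; tauto. }
  eauto.
Qed.

Lemma cont_eps g x : continuity_pt g x -> forall e, 0 < e -> exists d, 0 < d /\ forall y, Rabs (y - x) < d -> Rabs (g y - g x) < e.
Proof.
  intros Hc e He. destruct (Hc e He) as [d [Hd Hd2]]. exists d. split; auto.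
  intros y Hy. destruct (Req_dec y x) as [->|Hne]. { unfold Rminus; rewrite Rplus_opp_r, Rabs_R0; auto. }
  apply Hd2. split; [split; [exact I| auto]|]. exact Hy.
Qed.

Lemma deriv_cont g x l : derivable_pt_lim g x l -> forall e, 0 < e -> exists d, 0 < d /\ forall y, Rabs (y - x) < d -> Rabs (g y - g x) < e.
Proof. intros H. apply cont_eps, derivable_continuous_pt. exists l; exact H. Qed.


Definition sol {n} (F : Rn n -> Rn n) (g : R -> Rn n) : Prop :=
  forall t i, derivable_pt_lim (fun s => g s i) t (F (g t) i).
Definition box {n} (p : Rn n) r (a : Rn n) := forall i, Rabs (a i - p i) < r.
Definition LL {n} (F : Rn n -> Rn n) : Prop :=
  forall p, exists r L, 0 < r /\ 0 <= L /\ forall a b, box p r a -> box p r b ->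
     L1 (vsub (F a) (F b)) <= L * L1 (vsub a b).

Lemma cont_fsum n (G : Fin.t n -> R -> R) c :
  (forall i, continuity_pt (G i) c) -> continuity_pt (fun t => fsum n (fun i => G i t)) c.
Proof.
  induction n as [|m IH]; intros H; simpl.
  - apply continuity_pt_const. intros a b; reflexivity.
  - apply (continuity_pt_plus (G Fin.F1) (fun t => fsum m (fun i => G (Fin.FS i) t))); auto.
Qed.

Lemma sol_cont n F (g : R -> Rn n) i c : sol F g -> continuity_pt (fun s => g s i) c.
Proof. intros H. apply derivable_continuous_pt. exists (F (g c) i). apply H. Qed.

Lemma g_cont n F (a b : R -> Rn n) c : sol F a -> sol F b -> continuity_pt (fun t => L1 (vsub (a t) (b t))) c.
Proof.
  intros Ha Hb. unfold L1, vsub. apply (cont_fsum n (fun i t => Rabs (a t i - b t i))).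
  intros i. apply (continuity_pt_comp (fun t => a t i - b t i) Rabs).
  - apply (continuity_pt_minus (fun t => a t i) (fun t => b t i)); eapply sol_cont; eauto.
  - apply Rcontinuity_abs.
Qed.

Lemma curve_box n F (g : R -> Rn n) t0 r : sol F g -> 0 < r ->
  exists d, 0 < d /\ forall t, Rabs (t - t0) < d -> box (g t0) r (g t).
Proof.
  intros Hs Hr.
  destruct (fin_delta n (fun i d => forall t, Rabs (t - t0) < d -> Rabs (g t i - g t0 i) < r)) as [d [Hd H]].
  - intros j d d' Hd' Hj t Ht. apply Hj. lra.
  - intros j. apply (deriv_cont _ _ _ (Hs t0 j)); auto.
  - exists d. split; auto. intros t Ht i. apply H; auto.
Qed.

Lemma local_uniq n F (a b : R -> Rn n) t0 : LL F -> sol F a -> sol F b -> (forall i, a t0 i = b t0 i) ->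
  exists h, 0 < h /\ forall t, t0 <= t <= t0 + h -> forall i, a t i = b t i.
Proof.
  intros HL Ha Hb H0.
  destruct (HL (a t0)) as [r [L [Hr [HL0 HLip]]]].
  destruct (curve_box n F a t0 r Ha Hr) as [d1 [Hd1 Hb1]].
  destruct (curve_box n F b t0 r Hb Hr) as [d2 [Hd2 Hb2]].
  set (K := INR n * L).
  assert (HK : 0 <= K) by (unfold K; apply Rmult_le_pos; [apply pos_INR|auto]).
  set (h := Rmin (d1/2) (Rmin (d2/2) (/(2*(K + 1))))).
  assert (Hh0 : 0 < h). { unfold h. repeat apply Rmin_glb_lt; try lra. apply Rinv_0_lt_compat; lra. }
  assert (Hh1 : h <= d1/2) by apply Rmin_l.
  assert (Hh2 : h <= d2/2) by (eapply Rle_trans; [apply Rmin_r|apply Rmin_l]).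
  assert (Hh3 : h <= /(2*(K+1))) by (eapply Rle_trans; [apply Rmin_r|apply Rmin_r]).
  assert (HKh : K * h <= /2).
  { apply Rmult_le_compat_l with (r := K) in Hh3; auto.
    assert (K * / (2 * (K + 1)) <= /2); [|lra].
    apply Rmult_le_reg_r with (r := 2*(K+1)); [lra|]. rewrite Rmult_assoc, Rinv_l by lra.
    replace (/2 * (2 * (K+1))) with (K+1) by field. lra. }
  set (g := fun t => L1 (vsub (a t) (b t))).
  destruct (continuity_ab_maj g t0 (t0 + h)) as [Mx [HM HMx]]. { lra. }
  { intros; apply (g_cont n F); auto. }
  assert (Hbx : forall c, t0 <= c <= t0 + h -> box (a t0) r (a c) /\ box (a t0) r (b c)).
  { intros c Hc. split. apply Hb1. rewrite Rabs_right; lra.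
    intros i. rewrite H0. apply Hb2. rewrite Rabs_right; lra. }
  assert (Hcomp : forall i, Rabs (a Mx i - b Mx i) <= L * h * g Mx).
  { intros i. assert (Hg0 : 0 <= g Mx) by apply L1_nonneg.
    destruct (Req_dec Mx t0) as [->|Hne].
    { rewrite H0. unfold Rminus; rewrite Rplus_opp_r, Rabs_R0. apply Rmult_le_pos; [apply Rmult_le_pos|]; lra. }
    destruct (MVT_cor2 (fun s => a s i - b s i) (fun s => F (a s) i - F (b s) i) t0 Mx) as [c [Hc1 Hc2]].
    { lra. } { intros c _. apply (derivable_pt_lim_minus (fun s => a s i) (fun s => b s i)); auto. }
    rewrite H0 in Hc1. replace (a Mx i - b Mx i) with ((F (a c) i - F (b c) i) * (Mx - t0)) by lra.
    rewrite Rabs_mult. rewrite (Rabs_right (Mx - t0)) by lra.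
    destruct (Hbx c) as [Hx1 Hx2]; [lra|].
    pose proof (HLip _ _ Hx1 Hx2) as HLc.
    pose proof (comp_le_L1 n (vsub (F (a c)) (F (b c))) i) as Hci. unfold vsub at 1 in Hci.
    assert (g c <= g Mx) by (apply HM; lra).
    assert (Rabs (F (a c) i - F (b c) i) <= L * g Mx).
    { eapply Rle_trans; [exact Hci|]. eapply Rle_trans; [exact HLc|]. apply Rmult_le_compat_l; auto. }
    assert (0 <= Rabs (F (a c) i - F (b c) i)) by apply Rabs_pos.
    assert (Mx - t0 <= h) by lra.
    replace (L * h * g Mx) with ((L * g Mx) * h) by ring.
    apply Rmult_le_compat; lra. }
  assert (HgM : g Mx <= K * h * g Mx).
  { unfold g at 1. eapply Rle_trans. apply (L1_bound n _ (L * h * g Mx)). apply Hcomp.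
    unfold K; lra. }
  assert (Hg0 : 0 <= g Mx) by apply L1_nonneg.
  assert (HgZ : g Mx = 0) by nra.
  exists h. split; auto. intros t Ht i.
  assert (g t <= 0) by (rewrite <- HgZ; apply HM; lra).
  pose proof (comp_le_L1 n (vsub (a t) (b t)) i). unfold vsub at 1 in H1.
  pose proof (Rabs_pos (a t i - b t i)).
  assert (Rabs (a t i - b t i) = 0) by (unfold g in H; lra).
  destruct (Req_dec (a t i - b t i) 0); [lra|]. exfalso. apply Rabs_no_R0 in H4. lra.
Qed.


Lemma lub_below E c s : is_lub E c -> s < c -> exists u, E u /\ s < u.
Proof.
  intros [Hub Hl] Hs. destruct (classic (exists u, E u /\ s < u)) as [H|H]; auto.
  exfalso. assert (c <= s); [|lra]. apply Hl. intros u Hu. destruct (Rle_dec u s); auto.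
  exfalso; apply H; exists u; split; auto; lra.
Qed.

Lemma fwd_uniq n F (a b : R -> Rn n) : LL F -> sol F a -> sol F b -> (forall i, a 0 i = b 0 i) ->
  forall t, 0 <= t -> forall i, a t i = b t i.
Proof.
  intros HL Ha Hb H0 t Ht.
  set (E := fun u => 0 <= u <= t /\ forall s, 0 <= s <= u -> forall i, a s i = b s i).
  assert (HE0 : E 0). { split; [lra|]. intros s Hs i. replace s with 0 by lra. auto. }
  destruct (completeness E) as [c Hc].
  { exists t. intros u [Hu _]. lra. } { exists 0; auto. }
  assert (Hc0 : 0 <= c) by (apply (proj1 Hc); auto).
  assert (Hct : c <= t). { apply (proj2 Hc). intros u [Hu _]; lra. }
  assert (Hlt : forall s, 0 <= s < c -> forall i, a s i = b s i).
  { intros s Hs i. destruct (lub_below E c s Hc) as [u [[Hu1 Hu2] Hu3]]; [lra|]. apply Hu2. lra. }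
  assert (Hcc : forall i, a c i = b c i).
  { intros i. apply NNPP. intros Hne.
    assert (He : 0 < Rabs (a c i - b c i)) by (apply Rabs_pos_lt; lra).
    destruct (cont_eps (fun s => a s i - b s i) c) with (e := Rabs (a c i - b c i)) as [d [Hd Hd2]]; auto.
    { apply (continuity_pt_minus (fun s => a s i) (fun s => b s i)); eapply sol_cont; eauto. }
    destruct (Req_dec c 0) as [Hz|Hz]. { apply Hne. rewrite Hz. auto. }
    set (s := Rmax 0 (c - d/2)).
    assert (Hs1 : 0 <= s) by apply Rmax_l. assert (Hs2 : c - d/2 <= s) by apply Rmax_r.
    assert (Hs3 : s < c) by (unfold s; apply Rmax_lub_lt; lra).
    specialize (Hd2 s). rewrite (Hlt s) in Hd2 by lra.
    assert (Rabs (s - c) < d) by (rewrite Rabs_left by lra; lra).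
    specialize (Hd2 H). replace (b s i - b s i - (a c i - b c i)) with (- (a c i - b c i)) in Hd2 by ring.
    rewrite Rabs_Ropp in Hd2. lra. }
  assert (Hle : forall s, 0 <= s <= c -> forall i, a s i = b s i).
  { intros s Hs. destruct (Req_dec s c) as [->|]; auto. apply Hlt; lra. }
  destruct (local_uniq n F a b c HL Ha Hb Hcc) as [h [Hh Hloc]].
  assert (HEu : E (Rmin t (c + h))).
  { split. split; [apply Rmin_glb; lra| apply Rmin_l].
    intros s Hs. assert (s <= c + h) by (eapply Rle_trans; [apply Hs| apply Rmin_r]).
    destruct (Rle_dec s c). apply Hle; lra. apply Hloc; lra. }
  pose proof (proj1 Hc _ HEu) as Hu.
  destruct (Rle_dec t (c + h)).
  - rewrite Rmin_left in Hu by lra. apply Hle. lra.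
  - rewrite Rmin_right in Hu by lra. lra.
Qed.

Definition negF {n} (F : Rn n -> Rn n) : Rn n -> Rn n := fun x => vscale (-1) (F x).

Lemma LL_neg n (F : Rn n -> Rn n) : LL F -> LL (negF F).
Proof.
  intros H p. destruct (H p) as [r [L [Hr [HL HLip]]]]. exists r, L. repeat split; auto.
  intros a b Ha Hb. eapply Rle_trans; [|apply HLip; auto]. right. unfold L1, negF, vsub, vscale.
  apply fsum_ext. intros i. replace (-1 * F a i - -1 * F b i) with (- (F a i - F b i)) by ring. apply Rabs_Ropp.
Qed.

Lemma sol_neg n F (a : R -> Rn n) : sol F a -> sol (negF F) (fun s => a (- s)).
Proof.
  intros H t i. unfold negF, vscale.
  pose proof (derivable_pt_lim_comp (fun s => - s) (fun s => a s i) t (-1) (F (a (-t)) i)) as Hc.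
  replace (-1 * F (a (- t)) i) with (F (a (- t)) i * -1) by ring. apply Hc.
  - pose proof (derivable_pt_lim_opp (fun s => s) t 1 (derivable_pt_lim_id t)) as Ho. exact Ho.
  - apply H.
Qed.

Lemma ode_uniq n F (a b : R -> Rn n) : LL F -> sol F a -> sol F b -> (forall i, a 0 i = b 0 i) ->
  forall t i, a t i = b t i.
Proof.
  intros HL Ha Hb H0 t i. destruct (Rle_dec 0 t).
  - apply (fwd_uniq n F); auto.
  - pose proof (fwd_uniq n (negF F) (fun s => a (- s)) (fun s => b (- s)) (LL_neg n F HL) (sol_neg n F a Ha) (sol_neg n F b Hb)) as Hf.
    simpl in Hf. rewrite Ropp_0 in Hf. specialize (Hf H0 (- t)). rewrite Ropp_involutive in Hf. apply Hf; lra.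
Qed.


Lemma deriv_shift (phi : R -> R) h l :
  derivable_pt_lim (fun hh => phi (h + hh)) 0 l -> derivable_pt_lim phi h l.
Proof.
  intros H eps He. destruct (H eps He) as [d Hd]. exists d. intros hh Hh1 Hh2.
  specialize (Hd hh Hh1 Hh2). rewrite Rplus_0_l, Rplus_0_r in Hd. exact Hd.
Qed.

Lemma vadd_vscale_0 n (b : Rn n) e : vadd b (vscale 0 e) = b.
Proof. apply functional_extensionality; intros i; unfold vadd, vscale; ring. Qed.

Lemma step_lemma n (g : Rn n -> R) (dg : Rn n -> R) k p r M (a b : Rn n) :
  (forall x, derivable_pt_lim (fun h => g (vadd x (vscale h (basis k)))) 0 (dg x)) ->
  (forall q, box p r q -> Rabs (dg q) <= M) ->
  box p r a -> box p r b ->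
  Rabs (g (vadd b (vscale (a k - b k) (basis k))) - g b) <= M * Rabs (a k - b k).
Proof.
  intros Hd HM Ha Hb.
  set (phi := fun h => g (vadd b (vscale h (basis k)))).
  assert (Hphi : forall h, derivable_pt_lim phi h (dg (vadd b (vscale h (basis k))))).
  { intros h. apply deriv_shift. specialize (Hd (vadd b (vscale h (basis k)))).
    replace (fun hh => phi (h + hh)) with (fun hh => g (vadd (vadd b (vscale h (basis k))) (vscale hh (basis k)))); auto.
    apply functional_extensionality; intros hh. unfold phi. f_equal.
    apply functional_extensionality; intros i. unfold vadd, vscale; ring. }
  assert (Hbox : forall h, Rmin 0 (a k - b k) <= h <= Rmax 0 (a k - b k) -> box p r (vadd b (vscale h (basis k)))).
  { intros h Hh i. unfold vadd, vscale, basis. destruct (Fin.eq_dec k i) as [<-|Hne].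
    - pose proof (Ha k); pose proof (Hb k).
      destruct (Rle_dec 0 (a k - b k)).
      + rewrite Rmin_left in Hh by lra. rewrite Rmax_right in Hh by lra.
        apply Rabs_def1; apply Rabs_def2 in H; apply Rabs_def2 in H0; nra.
      + rewrite Rmin_right in Hh by lra. rewrite Rmax_left in Hh by lra.
        apply Rabs_def1; apply Rabs_def2 in H; apply Rabs_def2 in H0; nra.
    - rewrite Rmult_0_r, Rplus_0_r. apply Hb. }
  change (g b) with (g b). replace (g b) with (phi 0) by (unfold phi; rewrite vadd_vscale_0; auto).
  fold (phi (a k - b k)).
  destruct (Rtotal_order 0 (a k - b k)) as [Hlt|[Heq|Hgt]].
  - destruct (MVT_cor2 phi (fun h => dg (vadd b (vscale h (basis k)))) 0 (a k - b k)) as [c [Hc1 Hc2]]; auto.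
    rewrite Hc1, Rabs_mult. rewrite (Rabs_right (a k - b k - 0)) by lra. rewrite (Rabs_right (a k - b k)) by lra.
    replace (a k - b k - 0) with (a k - b k) by ring.
    apply Rmult_le_compat_r; [lra|]. apply HM, Hbox. rewrite Rmin_left, Rmax_right; lra.
  - rewrite <- Heq. rewrite Rminus_eq_0, Rabs_R0. lra.
  - destruct (MVT_cor2 phi (fun h => dg (vadd b (vscale h (basis k)))) (a k - b k) 0) as [c [Hc1 Hc2]]; auto.
    replace (phi (a k - b k) - phi 0) with (- (phi 0 - phi (a k - b k))) by ring.
    rewrite Rabs_Ropp, Hc1, Rabs_mult. rewrite (Rabs_right (0 - (a k - b k))) by lra. rewrite (Rabs_left (a k - b k)) by lra.
    replace (0 - (a k - b k)) with (- (a k - b k)) by ring.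
    apply Rmult_le_compat_r; [lra|]. apply HM, Hbox. rewrite Rmin_right, Rmax_left; lra.
Qed.

Definition tn {n} (i : Fin.t n) : nat := proj1_sig (Fin.to_nat i).

Lemma coord_ind n (g : Rn n -> R) p r M :
  (forall k, exists dg, (forall x, derivable_pt_lim (fun h => g (vadd x (vscale h (basis k)))) 0 (dg x))
       /\ forall q, box p r q -> Rabs (dg q) <= M) ->
  forall m a b, box p r a -> box p r b -> (forall i, (m <= tn i)%nat -> a i = b i) ->
  Rabs (g a - g b) <= M * fsum n (fun i => if Compare_dec.lt_dec (tn i) m then Rabs (a i - b i) else 0).
Proof.
  intros Hg. induction m as [|m IH]; intros a b Ha Hb Hab.
  - replace a with b. rewrite Rminus_eq_0, Rabs_R0.
    rewrite (fsum_ext n _ (fun _ => 0)). rewrite fsum_const. lra.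
    intros i. destruct (Compare_dec.lt_dec (tn i) 0); [lia|auto].
    apply functional_extensionality; intros i; symmetry; apply Hab; lia.
  - destruct (Compare_dec.lt_dec m n) as [Hmn|Hmn].
    + set (k := Fin.of_nat_lt Hmn).
      assert (Htk : tn k = m). { unfold tn, k. rewrite Fin.to_nat_of_nat. reflexivity. }
      assert (Hki : forall i, tn i = m -> i = k). { intros i Hi. apply Fin.to_nat_inj. fold (tn i) (tn k). lia. }
      set (c := vadd b (vscale (a k - b k) (basis k))).
      assert (Hc : forall i, c i = if Fin.eq_dec k i then a k else b i).
      { intros i. unfold c, vadd, vscale, basis. destruct (Fin.eq_dec k i) as [e|]; [rewrite <- e; ring|ring]. }
      assert (Hcb : box p r c). { intros i. rewrite Hc. destruct (Fin.eq_dec k i) as [<-|]; auto. }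
      destruct (Hg k) as [dg [Hdg HM]].
      pose proof (step_lemma n g dg k p r M a b Hdg HM Ha Hb) as Hs. fold c in Hs.
      assert (Hac : forall i, (m <= tn i)%nat -> a i = c i).
      { intros i Hi. rewrite Hc. destruct (Fin.eq_dec k i) as [<-|Hne]; auto.
        apply Hab. destruct (Nat.eq_dec (tn i) m) as [He|]; [|lia]. exfalso; apply Hne; symmetry; auto. }
      pose proof (IH a c Ha Hcb Hac) as HI.
      rewrite (fsum_ext n _ (fun i => if Compare_dec.lt_dec (tn i) m then Rabs (a i - b i) else 0)) in HI.
      2:{ intros i. destruct (Compare_dec.lt_dec (tn i) m); auto. rewrite Hc. destruct (Fin.eq_dec k i) as [e|]; auto. rewrite <- e in l; lia. }
      assert (HM0 : 0 <= M). { eapply Rle_trans; [apply Rabs_pos| apply (HM b Hb)]. }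
      set (S0 := fsum n (fun i => if Compare_dec.lt_dec (tn i) m then Rabs (a i - b i) else 0)) in *.
      assert (Hsum : S0 + Rabs (a k - b k) <= fsum n (fun i => if Compare_dec.lt_dec (tn i) (S m) then Rabs (a i - b i) else 0)).
      { eapply Rle_trans; [|apply fsum_le with (a := fun i => (if Compare_dec.lt_dec (tn i) m then Rabs (a i - b i) else 0) + (if Fin.eq_dec k i then Rabs (a i - b i) else 0))].
        - rewrite fsum_plus. apply Rplus_le_compat_l.
          pose proof (fsum_term n (fun i => if Fin.eq_dec k i then Rabs (a i - b i) else 0) k) as Ht.
          simpl in Ht. destruct (Fin.eq_dec k k) as [_|]; [|congruence]. apply Ht.
          intros j; destruct (Fin.eq_dec k j); [apply Rabs_pos|lra].
        - intros i. destruct (Fin.eq_dec k i) as [<-|Hne].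
          + destruct (Compare_dec.lt_dec (tn k) m); [lia|]. destruct (Compare_dec.lt_dec (tn k) (S m)); [lra|lia].
          + destruct (Compare_dec.lt_dec (tn i) m); destruct (Compare_dec.lt_dec (tn i) (S m)); try lia; try lra.
            exfalso; apply Hne; symmetry; apply Hki; lia. }
      replace (g a - g b) with ((g a - g c) + (g c - g b)) by ring.
      eapply Rle_trans; [apply Rabs_triang|].
      eapply Rle_trans; [|apply Rmult_le_compat_l; [exact HM0|exact Hsum]]. lra.
    + eapply Rle_trans. apply IH; auto. intros i Hi. exfalso. pose proof (proj2_sig (Fin.to_nat i)). unfold tn in Hi. simpl in *. lia.
      right. f_equal. apply fsum_ext. intros i. pose proof (proj2_sig (Fin.to_nat i)) as Hti. change (proj1_sig (Fin.to_nat i)) with (tn i) in Hti; cbv beta in Hti.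
      destruct (Compare_dec.lt_dec (tn i) m); destruct (Compare_dec.lt_dec (tn i) (S m)); try reflexivity; lia.
Qed.

Lemma coord_lip n (g : Rn n -> R) p r M :
  (forall k, exists dg, (forall x, derivable_pt_lim (fun h => g (vadd x (vscale h (basis k)))) 0 (dg x))
       /\ forall q, box p r q -> Rabs (dg q) <= M) ->
  forall a b, box p r a -> box p r b -> Rabs (g a - g b) <= M * L1 (vsub a b).
Proof.
  intros Hg a b Ha Hb. eapply Rle_trans. apply (coord_ind n g p r M Hg n); auto.
  intros i Hi. exfalso. pose proof (proj2_sig (Fin.to_nat i)). unfold tn in Hi. simpl in *. lia.
  right. f_equal. apply fsum_ext. intros i. pose proof (proj2_sig (Fin.to_nat i)) as Hti. change (proj1_sig (Fin.to_nat i)) with (tn i) in Hti; cbv beta in Hti.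
  destruct (Compare_dec.lt_dec (tn i) n); [reflexivity|lia].
Qed.

Lemma box_dist n (p q : Rn n) d : box p d q -> norm_Rn (vsub q p) <= INR n * d.
Proof. intros H. eapply Rle_trans; [apply norm_le_L1|]. apply L1_bound. intros i; left; apply H. Qed.

Lemma smooth_LL n (f : Rn n -> Rn n) : smooth f -> LL f.
Proof.
  intros Hs p.
  assert (Hj : forall j, exists d M, 0 < d /\ forall a b, box p d a -> box p d b -> Rabs (f a j - f b j) <= M * L1 (vsub a b)).
  { intros j. destruct (Hs j 1%nat) as [_ Hpart].
    destruct (fin_param n (fun k d M => exists dg, (forall x, derivable_pt_lim (fun h => f (vadd x (vscale h (basis k))) j) 0 (dg x))
       /\ forall q, box p d q -> Rabs (dg q) <= M)) as [d [M [Hd HdM]]].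
    - intros k d d' M M' Hd' HM' [dg [H1 H2]]. exists dg. split; auto. intros q Hq.
      eapply Rle_trans; [apply H2|auto]. intros i; specialize (Hq i); lra.
    - intros k. destruct (Hpart k) as [dg [H1 H2]]. simpl in H2.
      destruct (H2 p 1) as [del [Hdel Hdel2]]; [lra|].
      exists (del / (INR n + 1)), (Rabs (dg p) + 1). split.
      { apply Rdiv_lt_0_compat; auto. pose proof (pos_INR n); lra. }
      exists dg. split; auto. intros q Hq.
      assert (Hn : 0 <= INR n) by apply pos_INR.
      assert (norm_Rn (vsub q p) < del).
      { eapply Rle_lt_trans; [apply box_dist; eauto|].
        apply Rmult_lt_reg_r with (r := INR n + 1); [lra|].
        replace (INR n * (del / (INR n + 1)) * (INR n + 1)) with (INR n * del) by (field; lra). nra. }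
      specialize (Hdel2 q H). unfold dist_Rn in Hdel2.
      pose proof (Rabs_triang_inv (dg q) (dg p)). lra.
    - exists d, M. split; auto. apply (coord_lip n (fun x => f x j) p d M HdM). }
  destruct (fin_param n (fun j d M => forall a b, box p d a -> box p d b -> Rabs (f a j - f b j) <= M * L1 (vsub a b))) as [d [M [Hd HM]]].
  - intros j d d' M M' Hd' HM' H a b Ha Hb. eapply Rle_trans. apply H.
    intros i; specialize (Ha i); lra. intros i; specialize (Hb i); lra.
    apply Rmult_le_compat_r; auto. apply L1_nonneg.
  - exact Hj.
  - exists d, (INR n * Rmax M 0). split; auto. split. apply Rmult_le_pos. apply pos_INR. apply Rmax_r.
    intros a b Ha Hb. rewrite Rmult_assoc. apply L1_bound. intros j. unfold vsub at 1.
    eapply Rle_trans. apply HM; auto. apply Rmult_le_compat_r. apply L1_nonneg. apply Rmax_l.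
Qed.


Lemma interval_uniform (a b : R) (R0 : R -> R -> Prop) : a <= b ->
  (forall s d d', 0 < d' <= d -> R0 s d -> R0 s d') ->
  (forall s0, a <= s0 <= b -> exists r d, 0 < r /\ 0 < d /\ forall s, Rabs (s - s0) < r -> R0 s d) ->
  exists d, 0 < d /\ forall s, a <= s <= b -> R0 s d.
Proof.
  intros Hab Hm Hl.
  set (E := fun u => a <= u <= b /\ exists d, 0 < d /\ forall s, a <= s <= u -> R0 s d).
  assert (HEa : E a).
  { split; [lra|]. destruct (Hl a) as [r [d [Hr [Hd H]]]]; [lra|]. exists d. split; auto.
    intros s Hs. apply H. replace (s - a) with 0 by lra. rewrite Rabs_R0; auto. }
  destruct (completeness E) as [c Hc]. { exists b. intros u [Hu _]; lra. } { exists a; auto. }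
  assert (Hac : a <= c) by (apply (proj1 Hc); auto).
  assert (Hcb : c <= b). { apply (proj2 Hc). intros u [Hu _]; lra. }
  destruct (Hl c) as [r [d0 [Hr [Hd0 H0]]]]; [lra|].
  destruct (lub_below E c (c - r) Hc) as [u [[Hu1 [du [Hdu Hu2]]] Hu3]]; [lra|].
  assert (HEu : E (Rmin b (c + r/2))).
  { split. split; [apply Rmin_glb; lra|apply Rmin_l].
    exists (Rmin du d0). split; [apply Rmin_glb_lt; auto|].
    intros s Hs. assert (s <= c + r/2) by (eapply Rle_trans; [apply Hs|apply Rmin_r]).
    destruct (Rle_dec s u).
    - eapply Hm; [|apply Hu2; lra]. split; [apply Rmin_glb_lt; auto|apply Rmin_l].
    - eapply Hm; [|apply H0]. split; [apply Rmin_glb_lt; auto|apply Rmin_r].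
      apply Rabs_def1; lra. }
  pose proof (proj1 Hc _ HEu) as Hle.
  destruct (Rle_dec b (c + r/2)).
  - rewrite Rmin_left in HEu by lra. destruct HEu as [_ [d [Hd Hd2]]]. exists d. split; auto.
  - rewrite Rmin_right in Hle by lra. lra.
Qed.

Lemma shift_deriv (g : R -> R) c t l : derivable_pt_lim g (t + c) l -> derivable_pt_lim (fun s => g (s + c)) t l.
Proof.
  intros H eps He. destruct (H eps He) as [d Hd]. exists d. intros h Hh1 Hh2.
  replace (t + h + c) with (t + c + h) by ring. apply Hd; auto.
Qed.

Lemma glue_deriv (P1 P2 D1 D2 : R -> R) T :
  (forall t, derivable_pt_lim P1 t (D1 t)) -> (forall t, derivable_pt_lim P2 t (D2 t)) ->
  P1 T = P2 T -> D1 T = D2 T ->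
  forall t, derivable_pt_lim (fun s => if Rle_dec s T then P1 s else P2 s) t (if Rle_dec t T then D1 t else D2 t).
Proof.
  intros H1 H2 HP HD t eps He.
  destruct (H1 t eps He) as [d1 Hd1]. destruct (H2 t eps He) as [d2 Hd2].
  destruct (Rtotal_order t T) as [Hlt|[Heq|Hgt]].
  - assert (Hp : 0 < Rmin d1 (T - t)) by (apply Rmin_glb_lt; [apply cond_pos|lra]).
    exists (mkposreal _ Hp). intros h Hh Hh2. simpl in Hh2.
    assert (Rabs h < d1) by (eapply Rlt_le_trans; [exact Hh2|apply Rmin_l]).
    assert (Rabs h < T - t) by (eapply Rlt_le_trans; [exact Hh2|apply Rmin_r]).
    apply Rabs_def2 in H0.
    destruct (Rle_dec (t + h) T); [|lra]. destruct (Rle_dec t T); [|lra]. apply Hd1; auto.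
  - subst t. assert (Hp : 0 < Rmin d1 d2) by (apply Rmin_glb_lt; apply cond_pos).
    exists (mkposreal _ Hp). intros h Hh Hh2. simpl in Hh2.
    assert (Rabs h < d1) by (eapply Rlt_le_trans; [exact Hh2|apply Rmin_l]).
    assert (Rabs h < d2) by (eapply Rlt_le_trans; [exact Hh2|apply Rmin_r]).
    destruct (Rle_dec T T); [|lra].
    destruct (Rle_dec (T + h) T). apply Hd1; auto.
    rewrite HP, HD. apply Hd2; auto.
  - assert (Hp : 0 < Rmin d2 (t - T)) by (apply Rmin_glb_lt; [apply cond_pos|lra]).
    exists (mkposreal _ Hp). intros h Hh Hh2. simpl in Hh2.
    assert (Rabs h < d2) by (eapply Rlt_le_trans; [exact Hh2|apply Rmin_l]).
    assert (Rabs h < t - T) by (eapply Rlt_le_trans; [exact Hh2|apply Rmin_r]).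
    apply Rabs_def2 in H0.
    destruct (Rle_dec (t + h) T); [lra|]. destruct (Rle_dec t T); [lra|]. apply Hd2; auto.
Qed.

Lemma has_deriv_of n (x : R -> Rn n) (dx : R -> Rn n) t :
  (forall i, derivable_pt_lim (fun s => x s i) t (dx t i)) -> has_deriv_nonneg x t (dx t).
Proof.
  intros H i eps He. destruct (H i eps He) as [d Hd]. exists d. split; [apply cond_pos|].
  intros s Hs Hne Hst. specialize (Hd (s - t)). replace (t + (s - t)) with s in Hd by ring.
  apply Hd; auto. lra.
Qed.



Lemma num1 t T A C K eta th : 0 < T -> 0 <= t <= T -> Rabs A < eta -> Rabs C < 2 * eta -> Rabs K <= th + 2 * eta / T ->
  Rabs (A + t / T * C + t * (t - T) / T * K) <= 5 * eta + T * th.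
Proof.
  intros HT Ht HA HC HK.
  set (u := t / T). assert (Hu : 0 <= u <= 1).
  { unfold u. split. unfold Rdiv; apply Rmult_le_pos; [lra|apply Rlt_le, Rinv_0_lt_compat; lra]. apply Rmult_le_reg_r with T; auto. unfold Rdiv. rewrite Rmult_assoc, Rinv_l; lra. }
  replace (t * (t - T) / T) with (u * (t - T)) by (unfold u; field; lra).
  assert (Hv : Rabs (u * (t - T)) <= T).
  { rewrite Rabs_mult. rewrite Rabs_right by lra. rewrite Rabs_left1 by lra.
    assert (u * (-(t-T)) <= 1 * (-(t-T))) by (apply Rmult_le_compat_r; lra). lra. }
  assert (H1 : Rabs (u * C) <= 2 * eta).
  { rewrite Rabs_mult, (Rabs_right u) by lra. pose proof (Rabs_pos C).
    assert (u * Rabs C <= 1 * Rabs C) by (apply Rmult_le_compat_r; lra). lra. }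
  assert (H2 : Rabs (u * (t - T) * K) <= T * th + 2 * eta).
  { rewrite Rabs_mult. assert (0 <= Rabs K) by apply Rabs_pos. assert (0 <= Rabs (u * (t-T))) by apply Rabs_pos.
    eapply Rle_trans. apply Rmult_le_compat; eauto. right. field. lra. }
  eapply Rle_trans. apply Rabs_triang. eapply Rle_trans. apply Rplus_le_compat_r. apply Rabs_triang. lra.
Qed.

Lemma num2 t T C K eta th : 0 < T -> 0 <= t <= T -> Rabs C < 2 * eta -> Rabs K <= th + 2 * eta / T ->
  Rabs (C / T + (2 * t - T) / T * K) <= 4 * eta / T + th.
Proof.
  intros HT Ht HC HK.
  assert (Hw : Rabs ((2 * t - T) / T) <= 1).
  { unfold Rdiv. rewrite Rabs_mult, (Rabs_right (/T)) by (apply Rle_ge, Rlt_le, Rinv_0_lt_compat; auto).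
    apply Rmult_le_reg_r with T; auto. rewrite Rmult_assoc, Rinv_l by lra. rewrite Rmult_1_r, Rmult_1_l.
    apply Rabs_le; lra. }
  assert (H1 : Rabs (C / T) <= 2 * eta / T).
  { unfold Rdiv. rewrite Rabs_mult, (Rabs_right (/T)) by (apply Rle_ge, Rlt_le, Rinv_0_lt_compat; auto).
    apply Rmult_le_compat_r. apply Rlt_le, Rinv_0_lt_compat; auto. lra. }
  assert (H2 : Rabs ((2 * t - T) / T * K) <= th + 2 * eta / T).
  { rewrite Rabs_mult. assert (0 <= Rabs K) by apply Rabs_pos. assert (0 <= Rabs ((2*t-T)/T)) by apply Rabs_pos. nra. }
  eapply Rle_trans. apply Rabs_triang. assert (2*eta/T + (th + 2*eta/T) = 4*eta/T + th) by (field; lra). lra.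
Qed.

Lemma numK D C T eta th : 0 < T -> Rabs D < th -> Rabs C < 2 * eta -> Rabs (D - C / T) <= th + 2 * eta / T.
Proof.
  intros HT HD HC. unfold Rminus. eapply Rle_trans. apply Rabs_triang. rewrite Rabs_Ropp.
  unfold Rdiv. rewrite Rabs_mult, (Rabs_right (/T)) by (apply Rle_ge, Rlt_le, Rinv_0_lt_compat; auto).
  assert (0 < /T) by (apply Rinv_0_lt_compat; auto). nra.
Qed.


Lemma L1_vsub_tri n (q m p : Rn n) : L1 (vsub q p) <= L1 (vsub q m) + L1 (vsub m p).
Proof.
  replace (vsub q p) with (vadd (vsub q m) (vsub m p)). apply L1_triangle.
  apply functional_extensionality; intros i; unfold vadd, vsub; ring.
Qed.

Lemma uniform_f n (f : Rn n -> Rn n) (g : R -> Rn n) s1 s2 e : smooth f -> sol f g -> s1 <= s2 -> 0 < e ->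
  exists du, 0 < du /\ forall s, s1 <= s <= s2 -> forall q, L1 (vsub q (g s)) < du -> forall j, Rabs (f q j - f (g s) j) < 2 * e.
Proof.
  intros Hs Hg H12 He.
  assert (HN : 0 < INR n + 1) by (pose proof (pos_INR n); lra).
  destruct (fin_delta n (fun j d => forall s, s1 <= s <= s2 -> forall q, L1 (vsub q (g s)) < d -> Rabs (f q j - f (g s) j) < 2 * e)) as [d [Hd H]].
  - intros j d d' Hd' Hj s Hs1 q Hq. apply Hj; auto. lra.
  - intros j. destruct (interval_uniform s1 s2 (fun s d => forall q, L1 (vsub q (g s)) < d -> Rabs (f q j - f (g s) j) < 2 * e)) as [d [Hd Hd2]]; auto.
    + intros s d d' Hd' Hq q Hq'. apply Hq. lra.
    + intros s0 _. destruct (Hs j 0%nat (g s0) e He) as [d0 [Hd0 Hd0']].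
      assert (Hr0 : 0 < d0 / (2 * (INR n + 1))) by (apply Rdiv_lt_0_compat; lra).
      destruct (curve_box n f g s0 _ Hg Hr0) as [r [Hr Hbox]].
      exists r, (d0/2). split; auto. split; [lra|]. intros s Hs0 q Hq.
      assert (HL : L1 (vsub (g s) (g s0)) < d0 / 2).
      { eapply Rle_lt_trans. apply L1_bound. intros i. left. apply (Hbox s Hs0 i).
        apply Rmult_lt_reg_r with (2 * (INR n + 1)); [lra|].
        replace (INR n * (d0 / (2 * (INR n + 1))) * (2 * (INR n + 1))) with (INR n * d0) by (field; lra).
        pose proof (pos_INR n). nra. }
      assert (Hq1 : dist_Rn q (g s0) < d0).
      { unfold dist_Rn. eapply Rle_lt_trans. apply norm_le_L1. eapply Rle_lt_trans. apply (L1_vsub_tri n q (g s) (g s0)). lra. }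
      assert (Hq2 : dist_Rn (g s) (g s0) < d0).
      { unfold dist_Rn. eapply Rle_lt_trans. apply norm_le_L1. lra. }
      pose proof (Hd0' _ Hq1). pose proof (Hd0' _ Hq2).
      replace (f q j - f (g s) j) with ((f q j - f (g s0) j) - (f (g s) j - f (g s0) j)) by ring.
      eapply Rle_lt_trans. apply Rabs_triang. rewrite Rabs_Ropp. lra.
    + exists d. split; auto.
  - exists d. split; auto.
Qed.


Lemma fwd_interior n (f : Rn n -> Rn n) phi (V : Rn n -> Prop) mu (g : R -> Rn n) s1 s2 :
  smooth f -> is_flow f phi -> 0 < mu -> (forall y, reach f mu V y -> V y) -> sol f g ->
  (forall eta, 0 < eta -> exists z, V z /\ forall i, Rabs (z i - g s1 i) < eta) -> s1 < s2 ->
  exists eps, 0 < eps /\ forall w, dist_Rn w (g s2) < eps -> V w.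
Proof.
  intros Hs Hfl Hmu Hinv Hg Hcl H12.
  set (T := s2 - s1). assert (HT : 0 < T) by (unfold T; lra).
  set (N := INR n + 1). assert (Hn0 : 0 <= INR n) by apply pos_INR. assert (HN : 0 < N) by (unfold N; lra).
  set (B := mu / (4 * N)). assert (HB : 0 < B) by (unfold B; apply Rdiv_lt_0_compat; lra).
  destruct (uniform_f n f g s1 s2 B Hs Hg) as [du [Hdu Hunif]]; [lra|auto|].
  set (th := Rmin B (du / (2 * N * (T + 1)))).
  assert (Hth : 0 < th) by (apply Rmin_glb_lt; auto; apply Rdiv_lt_0_compat; [auto|]; apply Rmult_lt_0_compat; lra).
  assert (Hth1 : th <= B) by apply Rmin_l.
  assert (Hth2 : th <= du / (2 * N * (T + 1))) by apply Rmin_r.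
  destruct (fin_delta n (fun j d => forall y, dist_Rn y (g s2) < d -> Rabs (f y j - f (g s2) j) < th)) as [d2 [Hd2 Hcont2]].
  { intros j d d' Hd' H y Hy. apply H. lra. }
  { intros j. destruct (Hs j 0%nat (g s2) th Hth) as [d [Hd Hd']]. exists d; split; auto. }
  set (eta := Rmin d2 (Rmin (B * T / 4) (du / (10 * N)))).
  assert (Heta : 0 < eta).
  { unfold eta. repeat apply Rmin_glb_lt; auto. apply Rdiv_lt_0_compat; [apply Rmult_lt_0_compat|]; lra.
    apply Rdiv_lt_0_compat; lra. }
  assert (He1 : eta <= d2) by apply Rmin_l.
  assert (He2 : eta <= B * T / 4) by (eapply Rle_trans; [apply Rmin_r|apply Rmin_l]).
  assert (He3 : eta <= du / (10 * N)) by (eapply Rle_trans; [apply Rmin_r|apply Rmin_r]).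
  destruct (Hcl eta Heta) as [z [Hz Ha]].
  exists eta. split; auto. intros w Hw.
  assert (Hwc : forall i, Rabs (w i - g s2 i) < eta).
  { intros i. eapply Rle_lt_trans; [apply (comp_le_norm n (vsub w (g s2)) i)|]. exact Hw. }
  assert (Hdf : forall j, Rabs (f w j - f (g s2) j) < th) by (intros j; apply Hcont2; lra).
  set (ai := fun i => z i - g s1 i).
  set (ci := fun i => w i - g s2 i - ai i).
  set (ki := fun i => (f w i - f (g s2) i) - ci i / T).
  assert (Hci : forall i, Rabs (ci i) < 2 * eta).
  { intros i. unfold ci, ai. unfold Rminus at 1. eapply Rle_lt_trans. apply Rabs_triang. rewrite Rabs_Ropp.
    specialize (Ha i); specialize (Hwc i). lra. }
  assert (Hki : forall i, Rabs (ki i) <= th + 2 * eta / T) by (intros i; apply numK; auto).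
  set (P1 := fun i s => g (s + s1) i + (ai i + s / T * ci i + s * (s - T) / T * ki i)).
  set (D1 := fun i s => f (g (s + s1)) i + (ci i / T + (2 * s - T) / T * ki i)).
  set (P2 := fun i s => phi w (s + - T) i).
  set (D2 := fun i s => f (phi w (s + - T)) i).
  set (x := fun s i => if Rle_dec s T then P1 i s else P2 i s).
  set (dx := fun s i => if Rle_dec s T then D1 i s else D2 i s).
  assert (HT1 : T + s1 = s2) by (unfold T; ring).
  assert (Hphi0 : phi w (T + - T) = w) by (rewrite Rplus_opp_r; apply (proj1 (Hfl w))).
  apply Hinv. exists x, T. split; [|split; [|split]].
  3: lra.
  3: { apply functional_extensionality; intros i. unfold x. destruct (Rle_dec T T); [|lra].
       unfold P1. rewrite HT1. unfold ci, ai. field. lra. }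
  2: { replace (x 0) with z; auto. apply functional_extensionality; intros i. unfold x.
       destruct (Rle_dec 0 T); [|lra]. unfold P1, ai. rewrite Rplus_0_l. field. lra. }
  exists dx. intros t Ht. split.
  - apply has_deriv_of. intros i. unfold x, dx.
    apply (glue_deriv (P1 i) (P2 i) (D1 i) (D2 i) T).
    + intros t0. unfold P1, D1.
      apply (derivable_pt_lim_plus (fun s => g (s + s1) i) (fun s => ai i + s / T * ci i + s * (s - T) / T * ki i)).
      * apply (shift_deriv (fun s => g s i)). apply Hg.
      * apply poly_deriv. lra.
    + intros t0. unfold P2, D2. apply (shift_deriv (fun s => phi w s i)). apply (proj2 (Hfl w)).
    + unfold P1, P2. rewrite HT1, Hphi0. unfold ci, ai. field. lra.
    + unfold D1, D2. rewrite HT1, Hphi0. unfold ki. field. lra.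
  - destruct (Rle_dec t T) as [HtT|HtT].
    + assert (Hxt : x t = fun i => P1 i t) by (apply functional_extensionality; intros i; unfold x; destruct (Rle_dec t T); [auto|lra]).
      assert (Hdxt : dx t = fun i => D1 i t) by (apply functional_extensionality; intros i; unfold dx; destruct (Rle_dec t T); [auto|lra]).
      rewrite Hxt, Hdxt. eapply Rle_trans. apply norm_le_L1.
      assert (HL : L1 (vsub (fun i => P1 i t) (g (t + s1))) < du).
      { eapply Rle_lt_trans. apply (L1_bound n _ (5 * eta + T * th)).
        - intros i. unfold vsub, P1. replace (g (t + s1) i + (ai i + t / T * ci i + t * (t - T) / T * ki i) - g (t + s1) i)
            with (ai i + t / T * ci i + t * (t - T) / T * ki i) by ring.
          apply num1; [exact HT| lra | apply Ha | apply Hci | apply Hki].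
        - assert (5 * eta + T * th <= du / N).
          { assert (T * th <= (T + 1) * th) by (apply Rmult_le_compat_r; lra).
            assert ((T + 1) * th <= du / (2 * N)).
            { eapply Rle_trans. apply Rmult_le_compat_l; [lra|exact Hth2]. right. field. lra. }
            assert (5 * eta <= du / (2 * N)).
            { eapply Rle_trans. apply Rmult_le_compat_l; [lra|exact He3]. right. field. lra. }
            assert (du / (2 * N) + du / (2 * N) = du / N) by (field; lra). lra. }
          eapply Rle_lt_trans. apply Rmult_le_compat_l; [lra|exact H].
          replace (INR n * (du / N)) with (du - du / N) by (unfold N; field; lra).
          assert (0 < du / N) by (apply Rdiv_lt_0_compat; lra). lra. }
      eapply Rle_trans. apply (L1_bound n _ (4 * B)).
      * intros i. unfold vsub, D1.
        replace (f (fun i0 => P1 i0 t) i - (f (g (t + s1)) i + (ci i / T + (2 * t - T) / T * ki i)))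
          with ((f (fun i0 => P1 i0 t) i - f (g (t + s1)) i) - (ci i / T + (2 * t - T) / T * ki i)) by ring.
        eapply Rle_trans. unfold Rminus at 1. apply Rabs_triang. rewrite Rabs_Ropp.
        assert (Rabs (f (fun i0 => P1 i0 t) i - f (g (t + s1)) i) < 2 * B).
        { apply Hunif; auto. unfold T in HtT. lra. }
        assert (Rabs (ci i / T + (2 * t - T) / T * ki i) <= 4 * eta / T + th) by (apply num2; auto; lra).
        assert (4 * eta / T <= B).
        { apply Rmult_le_reg_r with T; auto. unfold Rdiv. rewrite Rmult_assoc, Rinv_l by lra. lra. }
        lra.
      * unfold B. replace (INR n * (4 * (mu / (4 * N)))) with (mu - mu / N) by (unfold N; field; lra).
        assert (0 < mu / N) by (apply Rdiv_lt_0_compat; lra). lra.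
    + assert (Hxt : x t = phi w (t + - T)) by (apply functional_extensionality; intros i; unfold x; destruct (Rle_dec t T); [lra|auto]).
      assert (Hdxt : dx t = f (phi w (t + - T))) by (apply functional_extensionality; intros i; unfold dx; destruct (Rle_dec t T); [lra|auto]).
      rewrite Hxt, Hdxt, norm_zero. lra.
Qed.


Lemma flow_shift n (f : Rn n -> Rn n) phi : smooth f -> is_flow f phi ->
  forall y t0 t, phi (phi y t0) t = phi y (t + t0).
Proof.
  intros Hs Hfl y t0 t. apply functional_extensionality; intros i.
  apply (ode_uniq n f (fun t => phi (phi y t0) t) (fun t => phi y (t + t0)) (smooth_LL n f Hs)).
  - intros s j. apply (proj2 (Hfl _)).
  - intros s j. apply (shift_deriv (fun s => phi y s j)). apply (proj2 (Hfl _)).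
  - intros j. rewrite (proj1 (Hfl _)), Rplus_0_l. reflexivity.
Qed.

Lemma clcl n (V : Rn n -> Prop) p : closure_Rn (closure_Rn V) p ->
  forall eta, 0 < eta -> exists z, V z /\ forall i, Rabs (z i - p i) < eta.
Proof.
  intros H eta He. destruct (H (eta/2)) as [y [Hy Hyd]]; [lra|].
  destruct (Hy (eta/2)) as [z [Hz Hzd]]; [lra|]. exists z. split; auto. intros i.
  pose proof (comp_le_norm n (vsub p y) i). pose proof (comp_le_norm n (vsub y z) i).
  unfold dist_Rn, vsub in *. 
  replace (z i - p i) with (- ((p i - y i) + (y i - z i))) by ring. rewrite Rabs_Ropp.
  eapply Rle_lt_trans. apply Rabs_triang. lra.
Qed.

Lemma bnd_once n (f : Rn n -> Rn n) phi (V : Rn n -> Prop) mu (g : R -> Rn n) s s' :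
  smooth f -> is_flow f phi -> 0 < mu -> (forall y, reach f mu V y -> V y) -> sol f g ->
  boundary_Rn (closure_Rn V) (g s) -> boundary_Rn (closure_Rn V) (g s') -> s < s' -> False.
Proof.
  intros Hs Hfl Hmu Hinv Hg [Hb1 _] [_ Hb2] Hlt.
  destruct (fwd_interior n f phi V mu g s s' Hs Hfl Hmu Hinv Hg (clcl n V _ Hb1) Hlt) as [e [He Hball]].
  destruct (Hb2 e He) as [q [Hq Hqd]]. apply Hq. intros e' He'. exists q. split.
  - apply Hball. unfold dist_Rn. rewrite norm_vsub_sym. exact Hqd.
  - unfold dist_Rn. rewrite norm_zero. exact He'.
Qed.

Theorem lemma2 (n : nat) (f : Rn n -> Rn n) (phi : Rn n -> R -> Rn n)
  (I U V : Rn n -> Prop) (mu : R) :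
  smooth f ->
  is_flow f phi ->
  0 < mu ->
  robustly_safe f I U mu ->
  (forall x, ~ (closure_Rn I x /\ closure_Rn U x)) ->
  bounded_Rn (complement_Rn U) ->
  robust_certificate f I U mu V ->
  forall x, reach_flow phi (boundary_Rn (closure_Rn V)) x ->
    exists! t : R, boundary_Rn (closure_Rn V) (phi x t).
Proof.
  intros Hs Hfl Hmu _ _ _ [_ [Hinv _]] x [y [t0 [Hy Hx]]].
  assert (Hsol : sol f (phi x)) by (intros t i; apply (proj2 (Hfl x))).
  assert (Hex : boundary_Rn (closure_Rn V) (phi x (- t0))).
  { rewrite Hx, (flow_shift n f phi Hs Hfl), Rplus_opp_l, (proj1 (Hfl y)). exact Hy. }
  exists (- t0). split; auto.
  intros t' Ht'. destruct (Rtotal_order (- t0) t') as [Hl|[He|Hg]]; auto.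
  - exfalso. exact (bnd_once n f phi V mu (phi x) _ _ Hs Hfl Hmu Hinv Hsol Hex Ht' Hl).
  - exfalso. exact (bnd_once n f phi V mu (phi x) _ _ Hs Hfl Hmu Hinv Hsol Ht' Hex Hg).
Qed.
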